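(* Let $F:\mathcal{P}(V,A)\to S_2(A)$ be an irreducible, weakly viable consular election rule satisfying SPP and SPO. Then every vertex of the range graph $\mathcal{G}(F)$ belongs to a $3$-cycle.
   Context: $V$ is a finite nonempty set of voters, $A$ a finite set of alternatives; a profile $P$ assigns to each voter $i$ a linear order $P_i$ on $A$; $P_i'P_{-i}$ replaces voter $i$'s order by $P_i'$; $P|_B$ is the profile of restrictions to $B\subseteq A$. $S_2(A)$ is the set of 2-element subsets of $A$; a consular election rule is a map $F:\mathcal{P}(V,A)\to S_2(A)$. SPO: for all $P$, $i$, $P_i'$, $\mathrm{best}(P_i,F(P))\succeq_i\mathrm{best}(P_i,F(P_i'P_{-i}))$; SPP: same with $\mathrm{worst}$, where $\mathrm{best}(P_i,W)$, $\mathrm{worst}(P_i,W)$ are the $P_i$-best and $P_i$-worst elements of $W$. Weakly viable: every $a\in A$ lies in $F(P)$ for some $P$. $F$ is reducible if there is a partition $A=B\uplus C$ and social choice functions $G:\mathcal{P}(V,B)\to B$, $H:\mathcal{P}(V,C)\to C$ with $F(P)=\{G(P|_B),H(P|_C)\}$ for all $P$; irreducible means not reducible. The range graph $\mathcal{G}(F)$ has vertex set $A$ and edge set equal to the range of $F$. *)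

(* Defs.v *)
From mathcomp Require Import all_boot.
Set Implicit Arguments. Unset Strict Implicit. Unset Printing Implicit Defensive.

(* A (strict) linear order on T: r x y means "x is strictly preferred to y". *)
Record linord (T : eqType) := Linord {
  lrel :> rel T;
  lrel_irr : irreflexive lrel;
  lrel_trans : transitive lrel;
  lrel_tot : forall x y, x != y -> lrel x y || lrel y x }.

Definition profile (V : finType) (T : eqType) := V -> linord T.

Definition upd (V : finType) (T : eqType) (P : profile V T) (i : V) (Q : linord T)
  : profile V T := fun j => if j == i then Q else P j.

Definition subalt (A : finType) (B : {set A}) := {x : A | x \in B}.

Section Restrict.
Variables (A : finType) (B : {set A}) (r : linord A).
Definition rrel : rel (subalt B) := fun x y => r (val x) (val y).
Lemma rrel_irr : irreflexive rrel.
Proof. by move=> x; rewrite /rrel lrel_irr. Qed.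
Lemma rrel_trans : transitive rrel.
Proof. by move=> y x z; rewrite /rrel; apply: lrel_trans. Qed.
Lemma rrel_tot x y : x != y -> rrel x y || rrel y x.
Proof. by move=> nxy; apply: lrel_tot; apply: contra nxy => /eqP/val_inj ->. Qed.
Definition restrict_ord : linord (subalt B) := Linord rrel_irr rrel_trans rrel_tot.
End Restrict.

Definition restr (V A : finType) (B : {set A}) (P : profile V A)
  : profile V (subalt B) := fun i => restrict_ord B (P i).

Definition S2 (A : finType) := {W : {set A} | #|W| == 2}.

Definition is_best (A : finType) (r : linord A) (W : {set A}) (x : A) :=
  x \in W /\ forall y, y \in W -> y != x -> r x y.
Definition is_worst (A : finType) (r : linord A) (W : {set A}) (x : A) :=
  x \in W /\ forall y, y \in W -> y != x -> r y x.

Definition wpref (A : finType) (r : linord A) (x y : A) := x = y \/ r x y.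

Definition SPO (V A : finType) (F : profile V A -> S2 A) :=
  forall (P : profile V A) (i : V) (Q : linord A) (b b' : A),
    is_best (P i) (val (F P)) b -> is_best (P i) (val (F (upd P i Q))) b' ->
    wpref (P i) b b'.

Definition SPP (V A : finType) (F : profile V A -> S2 A) :=
  forall (P : profile V A) (i : V) (Q : linord A) (w w' : A),
    is_worst (P i) (val (F P)) w -> is_worst (P i) (val (F (upd P i Q))) w' ->
    wpref (P i) w w'.

Definition weakly_viable (V A : finType) (F : profile V A -> S2 A) :=
  forall a : A, exists P, a \in val (F P).

Definition reducible (V A : finType) (F : profile V A -> S2 A) :=
  exists (B C : {set A})
         (G : profile V (subalt B) -> subalt B)
         (H : profile V (subalt C) -> subalt C),
    [/\ B :&: C = set0, B :|: C = setT &
        forall P, val (F P) = [set val (G (restr B P)); val (H (restr C P))]].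

Definition irreducible (V A : finType) (F : profile V A -> S2 A) := ~ reducible F.

Definition range_edge (V A : finType) (F : profile V A -> S2 A) (x y : A) :=
  exists P, val (F P) = [set x; y].

Definition on_3cycle (V A : finType) (F : profile V A -> S2 A) (a : A) :=
  exists b c : A, [&& a != b, b != c & a != c] /\
    [/\ range_edge F a b, range_edge F b c & range_edge F a c].

(* Main.v *)
Require Import Defs.
From mathcomp Require Import all_boot.
From Stdlib Require Import Classical ClassicalEpsilon FunctionalExtensionality.
Set Implicit Arguments. Unset Strict Implicit. Unset Printing Implicit Defensive.

Lemma ltr (T : eqType) (r : linord T) x y z : r x y -> r y z -> r x z.
Proof. move=> h1 h2; exact: (@lrel_trans _ r y x z h1 h2). Qed.

Lemma lasym (T : eqType) (r : linord T) x y : r x y -> r y x -> False.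
Proof. move=> h1 h2; have := ltr h1 h2; by rewrite lrel_irr. Qed.

Definition liftrel (T : eqType) (x : T) (r : linord T) : rel T :=
  fun u v => if u == x then v != x else if v == x then false else r u v.
Lemma liftrel_irr T x (r : linord T) : irreflexive (liftrel x r).
Proof. move=> u; rewrite /liftrel; case: (u =P x) => [e|_] //=; exact: lrel_irr. Qed.
Lemma liftrel_trans T x (r : linord T) : transitive (liftrel x r).
Proof.
move=> v u w; rewrite /liftrel.
case: (u =P x) => [_|_]; case: (v =P x) => [_|_]; case: (w =P x) => [_|_] //=.
exact: ltr.
Qed.
Lemma liftrel_tot T x (r : linord T) u v : u != v -> liftrel x r u v || liftrel x r v u.
Proof.
rewrite /liftrel => huv; case: (u =P x) => [eux|_]; case: (v =P x) => [evx|_] //=.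
- by move: huv; rewrite eux evx eqxx.
- exact: lrel_tot.
Qed.
Definition liftord (T : eqType) (x : T) (r : linord T) : linord T :=
  Linord (@liftrel_irr T x r) (@liftrel_trans T x r) (@liftrel_tot T x r).

Lemma lift_top (T : eqType) x (r : linord T) z : z != x -> liftord x r x z.
Proof. by rewrite /= /liftrel eqxx. Qed.
Lemma lift_below (T : eqType) x (r : linord T) z : liftord x r z x = false.
Proof. by rewrite /= /liftrel eqxx; case: (z == x). Qed.
Lemma lift_other (T : eqType) x (r : linord T) u v : u != x -> v != x -> liftord x r u v = r u v.
Proof. by move=> hu hv; rewrite /= /liftrel (negbTE hu) (negbTE hv). Qed.

Definition keyrel (T : eqType) (k : T -> nat) : rel T := fun u v => k u < k v.
Lemma keyrel_irr T k : irreflexive (@keyrel T k).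
Proof. by move=> u; rewrite /keyrel ltnn. Qed.
Lemma keyrel_trans T k : transitive (@keyrel T k).
Proof. by move=> v u w; rewrite /keyrel; apply: ltn_trans. Qed.
Lemma keyrel_tot T k (ki : injective k) u v : u != v -> @keyrel T k u v || keyrel k v u.
Proof. move=> huv; rewrite /keyrel; case: ltngtP => // /ki e; by rewrite e eqxx in huv. Qed.
Definition keyord (T : eqType) k (ki : injective k) : linord T :=
  Linord (@keyrel_irr T k) (@keyrel_trans T k) (keyrel_tot ki).

Definition rk (A : finType) (x : A) : nat := enum_rank x.
Lemma rk_inj (A : finType) : injective (@rk A).
Proof. by move=> x y /ord_inj/enum_rank_inj. Qed.
Definition base (A : finType) : linord A := keyord (@rk_inj A).

Definition bk (A : finType) (B : {set A}) (x : A) : nat := (x \notin B) * #|A| + rk x.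
Lemma bk_inj (A : finType) (B : {set A}) : injective (bk B).
Proof.
move=> x y e; apply: rk_inj.
have := congr1 (modn^~ #|A|) e; rewrite /bk !modnMDl !modn_small //; exact: ltn_ord.
Qed.
Definition blockord (A : finType) (B : {set A}) : linord A := keyord (@bk_inj A B).
Lemma block_false (A : finType) (B : {set A}) u v : u \notin B -> v \in B -> blockord B u v = false.
Proof.
move=> hu hv; rewrite /= /keyrel /bk hu hv /= mul1n mul0n add0n.
apply/negbTE; rewrite -leqNgt; apply: leq_trans (leq_addr _ _).
exact: ltnW (ltn_ord _).
Qed.

Lemma upd_at (V : finType) (T : eqType) (P : profile V T) i Q : upd P i Q i = Q.
Proof. by rewrite /upd eqxx. Qed.
Lemma upd_id (V : finType) (T : eqType) (P : profile V T) i : upd P i (P i) = P.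
Proof. apply: functional_extensionality => j; rewrite /upd; by case: eqP => [->|]. Qed.
Lemma upd_upd (V : finType) (T : eqType) (P : profile V T) i R Q : upd (upd P i R) i Q = upd P i Q.
Proof. apply: functional_extensionality => j; rewrite /upd; by case: eqP. Qed.

Lemma iter_upd (V : finType) (T : eqType) (Inv : profile V T -> Prop) (P Q : profile V T) :
  Inv P -> (forall X i, Inv X -> Inv (upd X i (Q i))) -> Inv Q.
Proof.
move=> h0 hs.
suff H : forall s : seq V, Inv (fun j => if j \in s then Q j else P j).
  have := H (enum V).
  have -> : (fun j => if j \in enum V then Q j else P j) = Q by
    apply: functional_extensionality => j; rewrite mem_enum.
  done.
elim=> [|x s IH].
  by have -> : (fun j => if j \in [::] then Q j else P j) = P by apply: functional_extensionality.
have -> : (fun j => if j \in x :: s then Q j else P j) = upd (fun j => if j \in s then Q j else P j) x (Q x).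
  by apply: functional_extensionality => j; rewrite /upd in_cons; case: (j =P x) => [->|_].
exact: hs.
Qed.

Lemma S2_pair (A : finType) (W : S2 A) : exists p q, p != q /\ val W = [set p; q].
Proof. case: W => W /= /cards2P [p [q [hpq ->]]]; by exists p, q. Qed.

Lemma S2_in2 (A : finType) (W : S2 A) x y z :
  x \in val W -> y \in val W -> x != y -> z \in val W -> z = x \/ z = y.
Proof.
have [p [q [hpq ->]]] := S2_pair W.
move=> /set2P[]-> /set2P[]->; rewrite ?eqxx // => _ /set2P[]->; auto.
Qed.

Lemma S2_other (A : finType) (W : S2 A) x : exists2 y, y \in val W & y != x.
Proof.
have [p [q [hpq ->]]] := S2_pair W.
case: (p =P x) => [<-|/eqP hpx]; last by exists p; rewrite ?set21.
by exists q; rewrite ?set22 // eq_sym.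
Qed.

Lemma best_ex (A : finType) (r : linord A) (W : S2 A) : exists b, is_best r (val W) b.
Proof.
have [p [q [hpq ->]]] := S2_pair W.
case/orP: (lrel_tot r hpq) => h.
- exists p; split; first by rewrite set21.
  by move=> z /set2P[]->; rewrite ?eqxx.
- exists q; split; first by rewrite set22.
  by move=> z /set2P[]->; rewrite ?eqxx.
Qed.

Lemma worst_ex (A : finType) (r : linord A) (W : S2 A) : exists b, is_worst r (val W) b.
Proof.
have [p [q [hpq ->]]] := S2_pair W.
case/orP: (lrel_tot r hpq) => h.
- exists q; split; first by rewrite set22.
  by move=> z /set2P[]->; rewrite ?eqxx.
- exists p; split; first by rewrite set21.
  by move=> z /set2P[]->; rewrite ?eqxx.
Qed.

Lemma wpref_trans (A : finType) (r : linord A) x y z : wpref r x y -> wpref r y z -> wpref r x z.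
Proof.
move=> [->|hxy] //; move=> [<-|hyz]; [by right | right; exact: ltr hxy hyz].
Qed.

Lemma SPO3 (V A : finType) (F : profile V A -> S2 A) : SPO F ->
  forall P i R Q z, z \in val (F (upd P i Q)) -> exists2 w, w \in val (F (upd P i R)) & wpref R w z.
Proof.
move=> hspo P i R Q z hz.
have [b hb] := best_ex R (F (upd P i R)).
have [b' hb'] := best_ex R (F (upd P i Q)).
exists b; first by case: hb.
have := hspo (upd P i R) i Q b b'; rewrite upd_upd upd_at => /(_ hb hb') h.
apply: wpref_trans h _.
case: hb' => _ h'. case: (eqVneq z b') => [->|hne]; [by left | right; exact: h'].
Qed.

Lemma SPP3 (V A : finType) (F : profile V A -> S2 A) : SPP F ->
  forall P i R Q, exists2 w', w' \in val (F (upd P i Q)) &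
     forall z, z \in val (F (upd P i R)) -> wpref R z w'.
Proof.
move=> hspp P i R Q.
have [w hw] := worst_ex R (F (upd P i R)).
have [w' hw'] := worst_ex R (F (upd P i Q)).
exists w'; first by case: hw'.
have := hspp (upd P i R) i Q w w'; rewrite upd_upd upd_at => /(_ hw hw') h.
move=> z hz; apply: wpref_trans _ h.
case: hw => _ h'. case: (eqVneq z w) => [->|hne]; [by left | right; exact: h'].
Qed.

Lemma edge_of (V A : finType) (F : profile V A -> S2 A) P x y :
  x \in val (F P) -> y \in val (F P) -> x != y -> range_edge F x y.
Proof.
move=> hx hy hxy; exists P.
have [p [q [hpq e]]] := S2_pair (F P).
move: hx hy hxy; rewrite e => /set2P[]-> /set2P[]->; rewrite ?eqxx // => _.
by rewrite setUC.
Qed.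

Lemma edge_neq (V A : finType) (F : profile V A -> S2 A) x y : range_edge F x y -> x != y.
Proof. case=> P e; move: (valP (F P)); rewrite e cards2; by case: (x != y). Qed.

Definition pb (P : Prop) : bool := if excluded_middle_informative P then true else false.
Lemma pbP (P : Prop) : reflect P (pb P).
Proof. rewrite /pb; case: excluded_middle_informative => h; by constructor. Qed.

Definition cross (V A : finType) (F : profile V A -> S2 A) (B : {set A}) :=
  forall P x y, x \in val (F P) -> y \in val (F P) -> x != y -> (x \in B) = (y \notin B).

Lemma cross_C (V A : finType) (F : profile V A -> S2 A) B : cross F B -> cross F (~: B).
Proof. move=> cr P x y hx hy hxy; by rewrite !inE (cr P x y hx hy hxy). Qed.

Lemma Bel (V A : finType) (F : profile V A -> S2 A) B : cross F B ->
  forall P, exists2 m, m \in val (F P) & m \in B.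
Proof.
move=> cr P; have [p [q [hpq e]]] := S2_pair (F P).
have hp : p \in val (F P) by rewrite e set21.
have hq : q \in val (F P) by rewrite e set22.
case hB: (p \in B); first by exists p.
exists q => //; by move: (cr P p q hp hq hpq); rewrite hB => /esym/negbFE.
Qed.

Lemma Buniq (V A : finType) (F : profile V A -> S2 A) B : cross F B ->
  forall P m m', m \in val (F P) -> m \in B -> m' \in val (F P) -> m' \in B -> m = m'.
Proof.
move=> cr P m m' h1 h2 h3 h4; apply/eqP; apply: contraT => hne.
by move: (cr P m m' h1 h3 hne); rewrite h2 h4.
Qed.

Lemma a_top_stay (V A : finType) (F : profile V A -> S2 A) : SPO F ->
  forall (P : profile V A) i (Q : linord A) a, a \in val (F P) ->
  (forall z, z != a -> Q a z) -> a \in val (F (upd P i Q)).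
Proof.
move=> hspo P i Q a haP htop.
have := @SPO3 _ _ _ hspo P i Q (P i) a; rewrite upd_id => /(_ haP) [w hw [e|hwa]].
  by rewrite -e.
case: (eqVneq w a) => [e|hne]; first by rewrite -e.
by exfalso; apply: (lasym hwa); apply: htop.
Qed.

Lemma unanim (V A : finType) (F : profile V A -> S2 A) : SPO F -> weakly_viable F ->
  forall a (P : profile V A), (forall i z, z != a -> P i a z) -> a \in val (F P).
Proof.
move=> hspo hwv a P htop; have [P0 h0] := hwv a.
apply: (@iter_upd V A (fun X => a \in val (F X)) P0 P h0) => X i hX.
exact: a_top_stay hspo X i (P i) a hX (htop i).
Qed.

Lemma step3 (V A : finType) (F : profile V A -> S2 A) : SPP F ->
  forall (P : profile V A) i a x y,
  a != x -> a != y -> x != y -> ~ range_edge F a x -> ~ range_edge F a y ->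
  x \in val (F P) -> y \in val (F P) ->
  x \in val (F (upd P i (liftord a (liftord x (liftord y (base A)))))) /\
  y \in val (F (upd P i (liftord a (liftord x (liftord y (base A)))))).
Proof.
move=> hspp P i a x y hax hay hxy nax nay hx hy.
set Q := liftord a (liftord x (liftord y (base A))).
have Qx z : Q z x -> z = a.
  case: (eqVneq z a) => // hz; rewrite /Q lift_other // 1?eq_sym //.
  by rewrite lift_below.
have Qy z : Q z y -> z = a \/ z = x.
  case: (eqVneq z a) => [->|hz]; first by left.
  rewrite /Q lift_other // 1?eq_sym //.
  case: (eqVneq z x) => [->|hzx]; first by right.
  by rewrite lift_other // 1?eq_sym // lift_below.
set W := F (upd P i Q).
have [w' hw' hall] := SPP3 hspp P i Q (P i); rewrite upd_id in hw'.
have inW z : z \in val W -> [\/ z = a, z = x | z = y].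
  move=> hz; have := hall z hz.
  case: (S2_in2 hx hy hxy hw') => ->.
  - by case=> [->|/Qx ->]; [apply: Or32 | apply: Or31].
  - by case=> [->|/Qy [->|->]]; [apply: Or33 | apply: Or31 | apply: Or32].
have naW : a \notin val W.
  apply/negP => haW; have [o ho hoa] := S2_other W a.
  case: (inW o ho) => e; first by rewrite e eqxx in hoa.
  - by apply: nax; rewrite -e; apply: edge_of haW ho _; rewrite eq_sym.
  - by apply: nay; rewrite -e; apply: edge_of haW ho _; rewrite eq_sym.
have inW' z : z \in val W -> z = x \/ z = y.
  move=> hz; case: (inW z hz) => e; [by rewrite -e hz in naW | by left | by right].
have [p [q [hpq e]]] := S2_pair W.
have hp : p \in val W by rewrite e set21.
have hq : q \in val W by rewrite e set22.
rewrite e.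
move: hpq; case: (inW' p hp) => ->; case: (inW' q hq) => ->; by rewrite ?set21 ?set22 ?eqxx.
Qed.

Lemma noMM (V A : finType) (F : profile V A -> S2 A) : SPO F -> SPP F -> weakly_viable F ->
  forall a (P : profile V A) x y,
  x \in val (F P) -> y \in val (F P) -> x != y -> ~ range_edge F a x -> ~ range_edge F a y -> False.
Proof.
move=> hspo hspp hwv a P x y hx hy hxy nax nay.
have hax : a != x.
  apply/eqP => e; subst x; apply: nay; exact: edge_of hx hy hxy.
have hay : a != y.
  apply/eqP => e; subst y; apply: nax; apply: edge_of hy hx _; by rewrite eq_sym.
pose Q := liftord a (liftord x (liftord y (base A))).
have [hxQ hyQ] : x \in val (F (fun _ => Q)) /\ y \in val (F (fun _ => Q)).
  apply: (@iter_upd V A (fun X => x \in val (F X) /\ y \in val (F X)) P (fun _ => Q)) => //.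
  move=> X i [h1 h2]; exact: step3.
have haQ : a \in val (F (fun _ : V => Q)).
  apply: unanim => // i z hz; exact: lift_top.
by case: (S2_in2 hxQ hyQ hxy haQ) => e; [move: hax | move: hay]; rewrite e eqxx.
Qed.

Lemma cross_N (V A : finType) (F : profile V A -> S2 A) : SPO F -> SPP F -> weakly_viable F ->
  forall a, ~ on_3cycle F a -> cross F [set z | pb (range_edge F a z)].
Proof.
move=> hspo hspp hwv a hno P x y hx hy hxy; rewrite !inE.
case: (pbP (range_edge F a x)) => ex; case: (pbP (range_edge F a y)) => ey //=.
- exfalso; apply: hno; exists x, y; split.
    by rewrite (edge_neq ex) hxy (edge_neq ey).
  split => //; exact: edge_of hx hy hxy.
- exfalso; exact: noMM hspo hspp hwv a P x y hx hy hxy ex ey.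
Qed.

Lemma ST (V A : finType) (F : profile V A -> S2 A) : SPO F -> SPP F ->
  forall (B : {set A}), cross F B ->
  forall (P : profile V A) i R1 R2 m m' n',
  m \in B -> m' \in B -> n' \notin B ->
  m \in val (F (upd P i R1)) -> m' \in val (F (upd P i R2)) -> n' \in val (F (upd P i R2)) ->
  m \in val (F (upd P i (liftord m (liftord n' (blockord B))))) /\
  n' \in val (F (upd P i (liftord m (liftord n' (blockord B))))).
Proof.
move=> hspo hspp B cr P i R1 R2 m m' n' hm hm' hn' h1 h2 h3.
set R3 := liftord m (liftord n' (blockord B)).
have hmn : m' != n' by apply: contraNneq hn' => <-.
have hmn2 : m != n' by apply: contraNneq hn' => <-.
have hmW : m \in val (F (upd P i R3)).
  have [w hw [e|hwm]] := @SPO3 _ _ _ hspo P i R3 R1 m h1; first by rewrite -e.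
  by rewrite /R3 lift_below in hwm.
split => //.
have [o ho hom] := S2_other (F (upd P i R3)) m.
have ho' : o \notin B by rewrite -(cr _ _ _ hmW ho) // eq_sym.
suff -> : n' = o by [].
apply/eqP; apply: contraT => hno.
have [w' hw' hall] := SPP3 hspp P i R3 R2.
have := hall o ho.
case: (S2_in2 h2 h3 hmn hw') => ->.
- case=> [e|h]; first by move: ho'; rewrite e hm'.
  move: h; rewrite /R3.
  case: (eqVneq m' m) => [->|hm'm]; first by rewrite lift_below.
  rewrite lift_other // lift_other // ?block_false //; by rewrite eq_sym.
- case=> [e|h]; first by move: hno; rewrite e eqxx.
  move: h; rewrite /R3 lift_other // ?lift_below //; by rewrite eq_sym.
Qed.

Lemma indep1 (V A : finType) (F : profile V A -> S2 A) : SPO F -> SPP F ->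
  forall (B : {set A}), cross F B ->
  forall (P : profile V A) i (R R' : linord A) m m',
  (forall u v, u \in B -> v \in B -> R u v = R' u v) ->
  m \in B -> m' \in B -> m \in val (F (upd P i R)) -> m' \in val (F (upd P i R')) -> R m m' -> False.
Proof.
move=> hspo hspp B cr P i R R' m m' hag hm hm' h1 h2 hR.
have hR' : R' m m' by rewrite -hag.
have hmm : m != m' by apply: contraTneq hR => ->; rewrite lrel_irr.
have [n' hn' hnm] := S2_other (F (upd P i R')) m'.
have hnB : n' \notin B by rewrite -(cr _ _ _ h2 hn') // eq_sym.
have [h3m h3n] := ST hspo hspp cr hm hm' hnB h1 h2 hn'.
set R3 := liftord m (liftord n' (blockord B)) in h3m h3n.
have hmn : m != n' by apply: contraNneq hnB => <-.
have hmn' : m' != n' by rewrite eq_sym.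
case/orP: (lrel_tot R' hmn) => h.
- have [w hw hwp] := @SPO3 _ _ _ hspo P i R' R3 m h3m.
  case: (S2_in2 h2 hn' hmn' hw) => e; rewrite e in hwp.
  + case: hwp => [e'|h']; first by rewrite e' eqxx in hmm.
    exact: lasym h' hR'.
  + case: hwp => [e'|h']; first by rewrite e' eqxx in hmn.
    exact: lasym h' h.
- have [w' hw' hall] := SPP3 hspp P i R' R3.
  have := hall m' h2.
  case: (S2_in2 h3m h3n hmn hw') => ->.
  + case=> [e'|h']; first by rewrite e' eqxx in hmm.
    exact: lasym h' hR'.
  + case=> [e'|h']; first by rewrite e' eqxx in hmn'.
    exact: lasym h' (ltr h hR').
Qed.

Lemma indep2 (V A : finType) (F : profile V A -> S2 A) : SPO F -> SPP F ->
  forall (B : {set A}), cross F B ->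
  forall (P : profile V A) i (R R' : linord A) m m',
  (forall u v, u \in B -> v \in B -> R u v = R' u v) ->
  m \in B -> m' \in B -> m \in val (F (upd P i R)) -> m' \in val (F (upd P i R')) -> m = m'.
Proof.
move=> hspo hspp B cr P i R R' m m' hag hm hm' h1 h2.
apply/eqP; apply: contraT => hne.
case/orP: (lrel_tot R hne) => h.
- by case: (indep1 hspo hspp cr hag hm hm' h1 h2 h).
- have hag' : forall u v, u \in B -> v \in B -> R' u v = R u v.
    by move=> u v hu hv; rewrite hag.
  have h' : R' m' m by rewrite -hag.
  by case: (indep1 hspo hspp cr hag' hm' hm h2 h1 (h' : R' m' m)).
Qed.

Lemma indep (V A : finType) (F : profile V A -> S2 A) : SPO F -> SPP F ->
  forall (B : {set A}), cross F B ->
  forall (Q Q' : profile V A),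
  (forall j u v, u \in B -> v \in B -> Q j u v = Q' j u v) ->
  forall z, z \in val (F Q') -> z \in B -> z \in val (F Q).
Proof.
move=> hspo hspp B cr Q Q' hag.
suff [] : (forall j u v, u \in B -> v \in B -> Q' j u v = Q j u v) /\
          (forall z, z \in val (F Q') -> z \in B -> z \in val (F Q)) by [].
apply: (@iter_upd V A (fun X => (forall j u v, u \in B -> v \in B -> X j u v = Q j u v) /\
          (forall z, z \in val (F X) -> z \in B -> z \in val (F Q))) Q Q') => //.
move=> X i [hX1 hX2]; split.
  move=> j u v hu hv; rewrite /upd; case: eqP => [->|_]; last exact: hX1.
  by rewrite hag.
move=> z hz hzB.
have [m hm hmB] := Bel cr X.
have hm' : m \in val (F (upd X i (X i))) by rewrite upd_id.
have hag' : forall u v, u \in B -> v \in B -> X i u v = Q' i u v.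
  by move=> u v hu hv; rewrite hX1 // hag.
have e := indep2 hspo hspp cr hag' hmB hzB hm' hz.
by rewrite -e; apply: hX2.
Qed.

Definition extrel (A : finType) (B : {set A}) (b0 : subalt B) (r : linord (subalt B)) : rel A :=
  fun u v => if u \in B then (if v \in B then r (insubd b0 u) (insubd b0 v) else true)
             else (if v \in B then false else base A u v).
Lemma extrel_irr A B b0 r : irreflexive (@extrel A B b0 r).
Proof. move=> u; rewrite /extrel; case: (u \in B); exact: lrel_irr. Qed.
Lemma extrel_trans A B b0 r : transitive (@extrel A B b0 r).
Proof.
move=> v u w; rewrite /extrel.
case: (u \in B); case: (v \in B); case: (w \in B) => //; exact: ltr.
Qed.
Lemma extrel_tot A B b0 r u v : u != v -> @extrel A B b0 r u v || extrel b0 r v u.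
Proof.
move=> huv; rewrite /extrel.
case hu: (u \in B); case hv: (v \in B) => //; last exact: lrel_tot.
apply: lrel_tot; apply: contra huv => /eqP e.
by rewrite -(insubdK b0 hu) -(insubdK b0 hv) e.
Qed.
Definition extord (A : finType) (B : {set A}) (b0 : subalt B) (r : linord (subalt B)) : linord A :=
  Linord (@extrel_irr A B b0 r) (@extrel_trans A B b0 r) (@extrel_tot A B b0 r).
Definition ext (V A : finType) (B : {set A}) (b0 : subalt B) (R : profile V (subalt B)) : profile V A :=
  fun j => extord b0 (R j).

Lemma ext_restr (V A : finType) (B : {set A}) (b0 : subalt B) (P : profile V A) j u v :
  u \in B -> v \in B -> ext b0 (restr B P) j u v = P j u v.
Proof. by move=> hu hv; rewrite /= /extrel hu hv /= /rrel !insubdK. Qed.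

Definition Gf (V A : finType) (F : profile V A -> S2 A) (B : {set A}) (b0 : subalt B)
  (R : profile V (subalt B)) : subalt B :=
  insubd b0 (odflt (val b0) [pick x in val (F (ext b0 R)) :&: B]).

Lemma Gf_spec (V A : finType) (F : profile V A -> S2 A) : SPO F -> SPP F ->
  forall (B : {set A}), cross F B -> forall (b0 : subalt B) (P : profile V A) m,
  m \in val (F P) -> m \in B -> val (Gf F b0 (restr B P)) = m.
Proof.
move=> hspo hspp B cr b0 P m hm hmB; rewrite /Gf.
case: pickP => [x /= | none].
- rewrite inE => /andP [hx hxB]; rewrite insubdK //.
  have hxP := indep hspo hspp cr (Q := P) (Q' := ext b0 (restr B P))
     (fun j u v hu hv => esym (ext_restr b0 P j hu hv)) hx hxB.
  exact: (Buniq cr hxP hxB hm hmB).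
- have [x hx hxB] := Bel cr (ext b0 (restr B P)).
  by move: (none x); rewrite inE hx hxB.
Qed.

Lemma mk_red (V A : finType) (F : profile V A -> S2 A) : SPO F -> SPP F ->
  forall (B : {set A}), cross F B -> subalt B -> subalt (~: B) -> reducible F.
Proof.
move=> hspo hspp B cr b0 c0.
have crC := cross_C cr.
exists B, (~: B), (Gf F b0), (Gf F c0); split; first exact: setICr.
  exact: setUCr.
move=> P.
have [p [q [hpq e]]] := S2_pair (F P).
have hp : p \in val (F P) by rewrite e set21.
have hq : q \in val (F P) by rewrite e set22.
have := cr P p q hp hq hpq.
case hpB: (p \in B) => /esym hqB.
- rewrite (Gf_spec hspo hspp cr b0 hp hpB) (Gf_spec hspo hspp crC c0 hq) ?inE //.
- rewrite (Gf_spec hspo hspp cr b0 hq (negbFE hqB)) (Gf_spec hspo hspp crC c0 hp) ?inE ?hpB //.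
  by rewrite setUC.
Qed.

Theorem fact39 (V A : finType) (F : profile V A -> S2 A) :
  0 < #|V| -> irreducible F -> weakly_viable F -> SPP F -> SPO F ->
  forall a : A, on_3cycle F a.
Proof.
move=> _ hirr hwv hspp hspo a.
apply: NNPP => hno; apply: hirr.
have crN := cross_N hspo hspp hwv hno.
pose Q := liftord a (base A).
have haQ : a \in val (F (fun _ : V => Q)).
  apply: unanim => // i z hz; exact: lift_top.
have [y hy hya] := S2_other (F (fun _ : V => Q)) a.
have hyN : y \in [set z | pb (range_edge F a z)].
  rewrite inE; apply/pbP; apply: edge_of haQ hy _; by rewrite eq_sym.
have haN : a \in ~: [set z | pb (range_edge F a z)].
  rewrite !inE; apply/pbP => /edge_neq; by rewrite eqxx.
exact: (mk_red hspo hspp crN (exist _ y hyN) (exist _ a haN)).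
Qed.
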